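(* Let $n\ge1$, identify $\mathbb{R}^{n+1}=\mathbb{R}^n\times\mathbb{R}$, let $f\colon\mathbb{R}^n\to(0,\infty)$ be continuous with epigraph $L=\{(x,y)\mid f(x)\le y\}$, and let $K\subset\mathbb{R}^{n+1}$ be a closed set with $K\cap L=\emptyset$. Suppose there exist no point $x_0\in\mathbb{R}^n$ and real numbers $0<y_1<y_2$ such that $(x_0,y_1)\notin K$ and $(x_0,y_2)\in K$. Then for every $x\in\mathbb{R}^n$ the vertical line $\{(x,y)\mid y\in\mathbb{R}\}$ contains at most one point $p$ with $d(p,K)=d(p,L)$.
   Context: $d(p,A)=\inf\{|p-q|\mid q\in A\}$ (Euclidean distance). *)

(* Defs.v *)
From HB Require Import structures.
From mathcomp Require Import all_boot all_order all_algebra.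
From mathcomp Require Import all_classical all_reals all_analysis.
Set Implicit Arguments. Unset Strict Implicit. Unset Printing Implicit Defensive.
Import Order.TTheory GRing.Theory Num.Theory.
Import numFieldNormedType.Exports.
Local Open Scope classical_set_scope.
Local Open Scope ring_scope.

Definition pt (R : realType) (n : nat) := ('rV[R]_n * R)%type.

Definition edist (R : realType) (n : nat) (p q : pt R n) : R :=
  Num.sqrt (\sum_(i < n) (p.1 0 i - q.1 0 i) ^+ 2 + (p.2 - q.2) ^+ 2).

(* d(p, A) = inf { |p - q| : q in A }, in the extended reals
   (so that d(p, emptyset) = +oo, as for the usual infimum). *)
Definition dist_set (R : realType) (n : nat) (p : pt R n) (A : set (pt R n))
  : \bar R :=
  ereal_inf [set (edist p q)%:E | q in A].

Definition epigraph (R : realType) (n : nat) (f : 'rV[R]_n -> R) : set (pt R n) :=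
  [set p | f p.1 <= p.2].

(* Main.v *)
Require Import Defs.
From HB Require Import structures.
From mathcomp Require Import all_boot all_order all_algebra.
From mathcomp Require Import all_classical all_reals all_analysis.
Import Order.TTheory GRing.Theory Num.Theory.
Import numFieldNormedType.Exports.
Local Open Scope classical_set_scope.
Local Open Scope ring_scope.
From mathcomp Require Import ring lra.

Section S.
Context {R : realType} {n : nat}.
Definition sqd (p q : pt R n) : R :=
  \sum_(i < n) (p.1 0 i - q.1 0 i) ^+ 2 + (p.2 - q.2) ^+ 2.

Lemma fst_cont : continuous (fun q : pt R n => q.1).
Proof. move=> [a b]; exact: cvg_fst. Qed.
Lemma snd_cont : continuous (fun q : pt R n => q.2).
Proof. move=> [a b]; exact: cvg_snd. Qed.

Lemma sum_cont (I : Type) (r : seq I) (F : I -> pt R n -> R) :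
  (forall i, continuous (F i)) -> continuous (fun q => \sum_(i <- r) F i q).
Proof.
move=> Fc; elim: r => [|i r IH] q.
  under eq_fun do rewrite big_nil. exact: cvg_cst.
under eq_fun do rewrite big_cons. apply: cvgD; [exact: Fc | exact: IH].
Qed.

Lemma sqd_cont (p : pt R n) : continuous (sqd p).
Proof.
move=> q; apply: cvgD.
  have := @sum_cont _ (index_enum 'I_n) (fun i q => (p.1 0 i - q.1 0 i) ^+ 2).
  apply => i {}q.
  apply: cvgM; (apply: cvgB; first exact: cvg_cst);
  exact: (@continuous_comp _ _ _ (fun q : pt R n => q.1) (fun M : 'rV[R]_n => M 0 i) q (fst_cont q) (@coord_continuous R 1 n 0 i _)).
apply: cvgM; (apply: cvgB; first exact: cvg_cst); exact: snd_cont.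
Qed.

Lemma sqd_ge0 (p q : pt R n) : 0 <= sqd p q.
Proof. by rewrite /sqd addr_ge0 ?sqr_ge0 // sumr_ge0 // => i _; rewrite sqr_ge0. Qed.

Lemma sqd_coord (p q : pt R n) (i : 'I_n) : (p.1 0 i - q.1 0 i) ^+ 2 <= sqd p q.
Proof.
rewrite /sqd (bigD1 i) //= -addrA lerDl addr_ge0 ?sqr_ge0 //.
by rewrite sumr_ge0 // => j _; rewrite sqr_ge0.
Qed.

Lemma sqd_snd (p q : pt R n) : (p.2 - q.2) ^+ 2 <= sqd p q.
Proof. by rewrite /sqd lerDr sumr_ge0 // => j _; rewrite sqr_ge0. Qed.

Lemma exists_min (p : pt R n) {A : set (pt R n)} {a0} : closed A -> A a0 ->
  exists2 a, A a & forall b, A b -> sqd p a <= sqd p b.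
Proof.
move=> clA Aa0.
set M := sqd p a0; set s := M + 1.
have M0 : 0 <= M by exact: sqd_ge0.
have bnd : forall d : R, d ^+ 2 <= M -> d \in `[- s, s].
  move=> d hd; rewrite in_itv /= /s; apply/andP; split; nra.
pose Box := [set v : 'rV[R]_n | forall i, `[p.1 0 i - s, p.1 0 i + s]%classic (v ord0 i)] `*` `[p.2 - s, p.2 + s]%classic.
pose C := A `&` [set q | sqd p q <= M].
have cB : compact Box.
  apply: compact_setX; last exact: segment_compact.
  have h := (@rV_compact R n (fun i => `[p.1 0 i - s, p.1 0 i + s]%classic) (fun i => @segment_compact R _ _)).
  exact h.
have clC : closed C.
  apply: closedI => //.
  have := (proj1 (continuous_closedP (sqd p)) (sqd_cont p)) [set x : R | x <= M].
  apply; exact: closed_le.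
have CB : C `<=` Box.
  move=> q [_ hq]; split => [i|] /=.
    have := bnd _ (le_trans (sqd_coord p q i) hq).
    rewrite !in_itv /= => /andP[h1 h2]; apply/andP; split; lra.
  have := bnd _ (le_trans (sqd_snd p q) hq).
  rewrite !in_itv /= => /andP[h1 h2]; apply/andP; split; lra.
have cC : compact C by exact: subclosed_compact clC cB CB.
have C0 : C !=set0 by exists a0; split => //=.
have [c cC' cmin] := compact_EVT_min C0 cC (continuous_subspaceT (sqd_cont p)).
move: cC'; rewrite inE => -[Ac Mc].
exists c => // b Ab.
have [hb|hb] := leP (sqd p b) M.
  by apply: cmin; rewrite inE.
by apply: le_trans Mc (ltW hb).
Qed.

Lemma near_pt {f : 'rV[R]_n -> R} (hf : continuous f) (a x : 'rV[R]_n) c :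
  f a < c -> exists t : R, [/\ 0 < t, t < 1 & f (a + t *: (x - a)) < c].
Proof.
move=> fac.
have gc : (fun t : R => f (a + t *: (x - a))) @ (0 : R) --> f a.
  have h1 : (fun t : R => a + t *: (x - a)) @ (0 : R) --> a + (0 : R) *: (x - a).
    apply: cvgD; first exact: cvg_cst.
    apply: cvgZ; [exact: cvg_id | exact: cvg_cst].
  have := @continuous_comp _ _ _ (fun t : R => a + t *: (x - a)) f 0 h1 (hf _).
  move=> h; have e : a + (0:R) *: (x - a) = a by rewrite scale0r addr0.
  by rewrite -[X in _ --> f X]e; exact: h.
have H := cvgr_lt (f a) gc c fac.
have [e /= e0 he] := (nbhs_ballP (0:R) _).1 (H _).
exists (Num.min (e/2) (1/2)); split.
- by rewrite lt_min; apply/andP; split; lra.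
- by rewrite gt_min; apply/orP; right; lra.
apply: he; rewrite /ball /= sub0r normrN ger0_norm; last first.
  by rewrite le_min; apply/andP; split; lra.
by rewrite gt_min; apply/orP; left; lra.
Qed.

Lemma hsum (a x : 'rV[R]_n) (t : R) :
  \sum_(i < n) (x 0 i - (a + t *: (x - a)) 0 i) ^+ 2
  = (1 - t) ^+ 2 * \sum_(i < n) (x 0 i - a 0 i) ^+ 2.
Proof.
rewrite mulr_sumr; apply: eq_bigr => i _; rewrite !mxE -exprMn; congr (_ ^+ 2).
ring.
Qed.

Lemma hzero (a x : 'rV[R]_n) :
  \sum_(i < n) (x 0 i - a 0 i) ^+ 2 = 0 -> a = x.
Proof.
move=> /eqP; rewrite psumr_eq0; last by move=> i _; rewrite sqr_ge0.
move=> /allP h; apply/rowP => i.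
have := h i (mem_index_enum i); rewrite /= sqrf_eq0 subr_eq0 => /eqP ->.
done.
Qed.

Lemma dist_min {p a : pt R n} {A : set (pt R n)} : A a ->
  (forall b, A b -> sqd p a <= sqd p b) -> dist_set p A = (Defs.edist p a)%:E.
Proof.
move=> Aa amin; apply/eqP; rewrite eq_le; apply/andP; split.
  by apply: ereal_inf_lbound; exists a.
apply: le_ereal_inf_tmp => _ [b Ab <-]; rewrite lee_fin /Defs.edist.
by apply: ler_wsqrtr; apply: amin.
Qed.

Lemma dist0 (p : pt R n) : dist_set p set0 = +oo%E.
Proof. by rewrite /dist_set image_set0 ereal_inf0. Qed.

Lemma sqE (x : 'rV[R]_n) (yy : R) (c : pt R n) :
  sqd (x, yy) c = \sum_(i < n) (x 0 i - c.1 0 i) ^+ 2 + (yy - c.2) ^+ 2.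
Proof. by []. Qed.

Lemma core {f : 'rV[R]_n -> R} {K : set (pt R n)} (hf : continuous f)
  (fpos : forall x, 0 < f x)
  (hKL : forall c, K c -> f c.1 <= c.2 -> False)
  (hdown : forall a b s, K (a, b) -> 0 < s -> s < b -> K (a, s))
  {x : 'rV[R]_n} {y y' : R} {q k : pt R n} :
  y < y' -> f q.1 <= q.2 -> K k ->
  (forall b, K b \/ f b.1 <= b.2 -> sqd (x, y) q <= sqd (x, y) b) ->
  (forall b, K b \/ f b.1 <= b.2 -> sqd (x, y') k <= sqd (x, y') b) -> False.
Proof.
move: q k => [q1 q2] [k1 k2] /= yy' Lq Kk ha hb.
have sg : forall c : 'rV[R]_n, 0 <= \sum_(i < n) (x 0 i - c 0 i) ^+ 2.
  by move=> c; apply: sumr_ge0 => i _; rewrite sqr_ge0.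
set Hq := \sum_(i < n) (x 0 i - q1 0 i) ^+ 2.
set Hk := \sum_(i < n) (x 0 i - k1 0 i) ^+ 2.
have Hq0 : 0 <= Hq by exact: sg.
have Hk0 : 0 <= Hk by exact: sg.
have fq0 := fpos q1.
have s1 : y <= q2.
  rewrite leNgt; apply/negP => h.
  have := ha (q1, y) (or_intror (le_trans Lq (ltW h))).
  rewrite !sqE /= -/Hq; nra.
have s2 : q2 <= k2.
  have h1 := ha (k1, k2) (or_introl Kk).
  have h2 := hb (q1, q2) (or_intror Lq).
  rewrite !sqE /= -/Hq -/Hk in h1 h2; nra.
have s3 : 0 < k2 by lra.
have s4 : k2 <= y'.
  rewrite leNgt; apply/negP => h.
  have [hy'|hy'] := ltP 0 y'.
    have := hb (k1, y') (or_introl (hdown _ _ _ Kk hy' h)).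
    rewrite !sqE /= -/Hk; nra.
  have h1 : 0 < k2 / 2 by lra.
  have h2 : k2 / 2 < k2 by lra.
  have := hb (k1, k2 / 2) (or_introl (hdown _ _ _ Kk h1 h2)).
  rewrite !sqE /= -/Hk; nra.
have s5 : Hk + (y' - k2) ^+ 2 <= Hq.
  have := hb (q1, y') (or_intror (le_trans Lq (le_trans s2 s4))).
  rewrite !sqE /= -/Hk -/Hq; nra.
have [hy|hy] := leP y 0.
  have h1 : 0 < q2 / 2 by lra.
  have h2 : q2 / 2 < k2 by lra.
  have := ha (k1, q2 / 2) (or_introl (hdown _ _ _ Kk h1 h2)).
  rewrite !sqE /= -/Hk -/Hq; nra.
have Kb : K (k1, y).
  have [h|h] := ltP y k2; first exact: hdown _ _ _ Kk hy h.
  by have -> : y = k2 by lra.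
have s6 := ha (k1, y) (or_introl Kb).
rewrite !sqE /= -/Hk -/Hq in s6.
have s7 : q2 < y' by nra.
have [t [t0 t1 ft]] := near_pt hf q1 x y' (le_lt_trans Lq s7).
have := hb (q1 + t *: (x - q1), y') (or_intror (ltW ft)).
rewrite !sqE /= hsum -/Hk -/Hq => s8.
have tt : 0 < t * (2 - t) by nra.
have e3 : Hq * (t * (2 - t)) <= 0 by nra.
have Hqz : Hq = 0.
  apply/le_anti/andP; split => //.
  rewrite leNgt; apply/negP => hq.
  have : 0 < Hq * (t * (2 - t)) by rewrite mulr_gt0.
  lra.
have Hkz : Hk = 0 by apply/le_anti/andP; split => //; nra.
have eq1 := @hzero q1 x Hqz; have eq2 := @hzero k1 x Hkz.
apply: (hKL _ Kk) => /=; rewrite eq2 -eq1; lra.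
Qed.
End S.

Theorem theorem3 (R : realType) (n : nat) (hn : (1 <= n)%N)
  (f : 'rV[R]_n -> R) (K : set ('rV[R]_n * R)%type) :
  continuous f ->
  (forall x, 0 < f x) ->
  closed K ->
  K `&` epigraph f = set0 ->
  ~ (exists (x0 : 'rV[R]_n) (y1 y2 : R),
       [/\ 0 < y1, y1 < y2, ~ K (x0, y1) & K (x0, y2)]) ->
  forall (x : 'rV[R]_n) (y y' : R),
    dist_set (x, y) K = dist_set (x, y) (epigraph f) ->
    dist_set (x, y') K = dist_set (x, y') (epigraph f) ->
    y = y'.
Proof.
move=> hf fpos clK hKL0 hd x.
have hKL : forall c : pt R n, K c -> f c.1 <= c.2 -> False.
  move=> c Kc Lc; have : (K `&` epigraph f) c by split.
  by rewrite hKL0.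
have hdown : forall a b s, K (a, b) -> 0 < s -> s < b -> K (a, s).
  move=> a b s Kab s0 sb; case: (pselect (K (a, s))) => // nK.
  by exfalso; apply: hd; exists a, s, b; split.
have clL : closed (epigraph f).
  have -> : epigraph f = (fun c : pt R n => c.2 - f c.1) @^-1` [set r : R | 0 <= r].
    by apply/seteqP; split => c /=; rewrite /epigraph /= subr_ge0.
  apply: (proj1 (continuous_closedP _)); last exact: closed_ge.
  move=> c; apply: cvgB; first exact: snd_cont.
  have h := (@continuous_comp _ _ _ (fun c : pt R n => c.1) f c (fst_cont c) (hf _)).
  exact: h.
have key : forall y y', y < y' ->
    dist_set (x, y) K = dist_set (x, y) (epigraph f) ->
    dist_set (x, y') K = dist_set (x, y') (epigraph f) -> False.
  move=> y y' yy' e1 e2.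
  have Lx : epigraph f (x, f x) by rewrite /epigraph /=.
  have [qa Lqa qamin] := exists_min (x, y) clL Lx.
  have [qb Lqb qbmin] := exists_min (x, y') clL Lx.
  have [[k0 Kk0]|nK] := pselect (exists k, K k); last first.
    have K0 : K = set0 by apply/seteqP; split => c // Kc; apply: nK; exists c.
    by move: e1; rewrite K0 dist0 (dist_min Lqa qamin).
  have [ka Kka kamin] := exists_min (x, y) clK Kk0.
  have [kb Kkb kbmin] := exists_min (x, y') clK Kk0.
  rewrite (dist_min Kka kamin) (dist_min Lqa qamin) in e1.
  rewrite (dist_min Kkb kbmin) (dist_min Lqb qbmin) in e2.
  have sqeq : forall (p a b : pt R n), Defs.edist p a = Defs.edist p b -> sqd p a = sqd p b.
    move=> p a b /(congr1 (fun t => t ^+ 2)).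
    by rewrite /Defs.edist !sqr_sqrtr // sqd_ge0.
  move: e1 e2 => [/sqeq e1] [/sqeq e2].
  apply: (core hf fpos hKL hdown yy' Lqa Kkb).
    move=> b [Kb|Lb]; last exact: qamin.
    by rewrite -e1; exact: kamin.
  move=> b [Kb|Lb]; first exact: kbmin.
  by rewrite e2; exact: qbmin.
move=> y y' e1 e2.
have [h|h|h] := ltgtP y y' => //.
  by exfalso; exact: key h e1 e2.
by exfalso; exact: key h e2 e1.
Qed.
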